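(* Let $A_1,B_3,A_2,B_1,A_3,B_2$ be six points lying on a (nondegenerate) conic, taken as the vertices, in this order, of the inscribed hexagon $A_1B_3A_2B_1A_3B_2$, in general position so that the points below are well defined. For every permutation $(i,j,k)$ of $(1,2,3)$ let $Q_{ij}$ be the intersection point of the lines $A_iB_k$ and $B_jA_k$. Then the three lines $Q_{12}Q_{21}$, $Q_{13}Q_{31}$ and $Q_{23}Q_{32}$ pass through a common point.
   Context: Points and lines are in the real projective plane. *)

(* Defs.v *)
(* Real projective plane P^2(R) via homogeneous coordinates:
   a point is a nonzero row vector in R^3, two such vectors represent the same
   point iff they are proportional. *)
From HB Require Import structures.
From mathcomp Require Import all_boot all_order all_algebra.
From mathcomp Require Import reals.
Set Implicit Arguments. Unset Strict Implicit. Unset Printing Implicit Defensive.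
Import Order.TTheory GRing.Theory Num.Theory.
Local Open Scope ring_scope.

Section Proj.
Variable R : realType.

Definition ppoint (p : 'rV[R]_3) : Prop := p != 0.

Definition proj_eq (p q : 'rV[R]_3) : Prop := exists c : R, c != 0 /\ q = c *: p.

Definition rows3 (p q r : 'rV[R]_3) : 'M[R]_3 :=
  \matrix_(i < 3, j < 3)
    (if i == 0 :> nat then p 0 j else if i == 1 :> nat then q 0 j else r 0 j).

Definition collinear (p q r : 'rV[R]_3) : Prop := \det (rows3 p q r) = 0.

Definition nondeg_conic (M : 'M[R]_3) : Prop := M^T = M /\ \det M != 0.

Definition on_conic (M : 'M[R]_3) (p : 'rV[R]_3) : Prop :=
  (p *m M *m p^T) 0 0 = 0.

End Proj.

(* Main.v *)
Require Import Defs.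
From HB Require Import structures.
From mathcomp Require Import all_boot all_order all_algebra.
From mathcomp Require Import reals.
From mathcomp Require Import ring lra.
Import Order.TTheory GRing.Theory Num.Theory.
Local Open Scope ring_scope.

Set Implicit Arguments. Unset Strict Implicit.

Section Aux.
Variable R : realType.
Implicit Types (p q r : 'rV[R]_3).

Definition i0 : 'I_3 := @Ordinal 3 0 isT.
Definition i1 : 'I_3 := @Ordinal 3 1 isT.
Definition i2 : 'I_3 := @Ordinal 3 2 isT.

Ltac canon_ord t := let v := eval compute in (nat_of_ord t) in
   match v with 0%N => constr:(i0) | 1%N => constr:(i1) | 2%N => constr:(i2) end.

Lemma det3E (A : 'M[R]_3) : \det A = A i0 i0 * (A i1 i1 * A i2 i2 - A i1 i2 * A i2 i1) - A i0 i1 * (A i1 i0 * A i2 i2 - A i1 i2 * A i2 i0) + A i0 i2 * (A i1 i0 * A i2 i1 - A i1 i1 * A i2 i0).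
Proof.
rewrite (expand_det_row _ ord0) !big_ord_recl big_ord0 /cofactor.
rewrite !(expand_det_row _ ord0) !big_ord_recl !big_ord0 /cofactor !det_mx11 !mxE /bump /=.
repeat match goal with |- context [@fun_of_matrix _ _ _ A ?x ?y] =>
  first [ lazymatch x with i0 => fail | i1 => fail | i2 => fail | _ => idtac end;
          let x' := canon_ord x in rewrite (_ : x = x'); [|by apply/val_inj]
        | lazymatch y with i0 => fail | i1 => fail | i2 => fail | _ => idtac end;
          let y' := canon_ord y in rewrite (_ : y = y'); [|by apply/val_inj] ] end.
ring.
Qed.

Lemma ord3P (i : 'I_3) : i = i0 \/ i = i1 \/ i = i2.
Proof.
case: i => [[|[|[|m]]] Hm].
- by left; apply/val_inj.
- by right; left; apply/val_inj.
- by right; right; apply/val_inj.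
- by [].
Qed.

Definition v3 (x y z : R) : 'rV[R]_3 :=
  \row_(j < 3) (if j == i0 then x else if j == i1 then y else z).
Lemma v3E0 x y z : v3 x y z 0 i0 = x. Proof. by rewrite mxE. Qed.
Lemma v3E1 x y z : v3 x y z 0 i1 = y. Proof. by rewrite mxE. Qed.
Lemma v3E2 x y z : v3 x y z 0 i2 = z. Proof. by rewrite mxE. Qed.

Lemma rV3P p q : p 0 i0 = q 0 i0 -> p 0 i1 = q 0 i1 -> p 0 i2 = q 0 i2 -> p = q.
Proof.
move=> h0 h1 h2; apply/rowP => j.
by case: (ord3P j) => [->|[->|->]].
Qed.

Lemma v3K p : p = v3 (p 0 i0) (p 0 i1) (p 0 i2).
Proof. by apply: rV3P; rewrite ?v3E0 ?v3E1 ?v3E2. Qed.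

Lemma scaleE (k : R) p j : (k *: p) 0 j = k * p 0 j.
Proof. by rewrite mxE. Qed.
Lemma addE p q j : (p + q) 0 j = p 0 j + q 0 j.
Proof. by rewrite mxE. Qed.
Lemma zeroE j : (0 : 'rV[R]_3) 0 j = 0.
Proof. by rewrite mxE. Qed.

Definition dot p q := p 0 i0 * q 0 i0 + p 0 i1 * q 0 i1 + p 0 i2 * q 0 i2.
Definition cross p q : 'rV[R]_3 :=
  v3 (p 0 i1 * q 0 i2 - p 0 i2 * q 0 i1) (p 0 i2 * q 0 i0 - p 0 i0 * q 0 i2)
     (p 0 i0 * q 0 i1 - p 0 i1 * q 0 i0).

Lemma detrows p q r : \det (rows3 p q r) = dot r (cross p q).
Proof.
rewrite det3E /dot /cross ?v3E0 ?v3E1 ?v3E2 !mxE /=. ring.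
Qed.


Ltac canon_idx x :=
  let T := type of x in
  lazymatch T with
  | ordinal ?k =>
    let k' := eval compute in k in
    lazymatch k' with
    | 3%N => lazymatch x with i0 => fail | i1 => fail | i2 => fail
             | _ => let x' := canon_ord x in rewrite (_ : x = x'); [|by apply/val_inj] end
    | 1%N => let z := constr:(0 : 'I_1) in
             tryif constr_eq x z then fail else (rewrite (_ : x = z); [|by apply/val_inj])
    end
  end.
Ltac canon := repeat match goal with
  |- context [@fun_of_matrix _ _ _ ?A ?x ?y] => first [canon_idx x | canon_idx y] end.

Lemma par x n : cross x n = 0 -> n != 0 -> exists l : R, x = l *: n.
Proof.
move=> hc hn.
have e0 := congr1 (fun v : 'rV[R]_3 => v 0 i0) hc.
have e1 := congr1 (fun v : 'rV[R]_3 => v 0 i1) hc.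
have e2 := congr1 (fun v : 'rV[R]_3 => v 0 i2) hc.
rewrite /= /cross ?v3E0 ?v3E1 ?v3E2 !zeroE in e0 e1 e2.
have [h0|h0] := eqVneq (n 0 i0) 0; last first.
  exists (x 0 i0 / n 0 i0); apply: rV3P; rewrite !scaleE.
  - by field.
  - have -> : x 0 i1 = (x 0 i0 * n 0 i1 - (x 0 i0 * n 0 i1 - x 0 i1 * n 0 i0)) / n 0 i0 by field.
    by rewrite e2; field.
  - have -> : x 0 i2 = (x 0 i0 * n 0 i2 + (x 0 i2 * n 0 i0 - x 0 i0 * n 0 i2)) / n 0 i0 by field.
    by rewrite e1; field.
have [h1|h1] := eqVneq (n 0 i1) 0; last first.
  exists (x 0 i1 / n 0 i1); apply: rV3P; rewrite !scaleE.
  - have -> : x 0 i0 = (x 0 i1 * n 0 i0 + (x 0 i0 * n 0 i1 - x 0 i1 * n 0 i0)) / n 0 i1 by field.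
    by rewrite e2; field.
  - by field.
  - have -> : x 0 i2 = (x 0 i1 * n 0 i2 - (x 0 i1 * n 0 i2 - x 0 i2 * n 0 i1)) / n 0 i1 by field.
    by rewrite e0; field.
have [h2|h2] := eqVneq (n 0 i2) 0; last first.
  exists (x 0 i2 / n 0 i2); apply: rV3P; rewrite !scaleE.
  - have -> : x 0 i0 = (x 0 i2 * n 0 i0 - (x 0 i2 * n 0 i0 - x 0 i0 * n 0 i2)) / n 0 i2 by field.
    by rewrite e1; field.
  - have -> : x 0 i1 = (x 0 i2 * n 0 i1 + (x 0 i1 * n 0 i2 - x 0 i2 * n 0 i1)) / n 0 i2 by field.
    by rewrite e0; field.
  - by field.
exfalso; move/eqP: hn; apply; apply: rV3P; by rewrite zeroE.
Qed.

Lemma kerL x a b : dot x a = 0 -> dot x b = 0 -> cross a b != 0 ->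
  exists l : R, x = l *: cross a b.
Proof.
move=> ha hb hn; apply: par => //.
apply: rV3P; rewrite zeroE.
- transitivity (a 0 i0 * dot x b - b 0 i0 * dot x a);
    first by rewrite /dot /cross ?v3E0 ?v3E1 ?v3E2; ring.
  by rewrite ha hb; ring.
- transitivity (a 0 i1 * dot x b - b 0 i1 * dot x a);
    first by rewrite /dot /cross ?v3E0 ?v3E1 ?v3E2; ring.
  by rewrite ha hb; ring.
- transitivity (a 0 i2 * dot x b - b 0 i2 * dot x a);
    first by rewrite /dot /cross ?v3E0 ?v3E1 ?v3E2; ring.
  by rewrite ha hb; ring.
Qed.

Definition beta (M : 'M[R]_3) p q := (p *m M *m q^T) 0 0.

Lemma betaE M p q : beta M p q = dot (p *m M) q.
Proof.
rewrite /beta /dot mxE !big_ord_recl big_ord0 !mxE. canon. ring.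
Qed.


Lemma betaDl M p q r : beta M (p + q) r = beta M p r + beta M q r.
Proof. by rewrite /beta !mulmxDl mxE. Qed.
Lemma betaZl M (k : R) p r : beta M (k *: p) r = k * beta M p r.
Proof. by rewrite /beta -!scalemxAl mxE. Qed.
Lemma betaDr M p q r : beta M r (p + q) = beta M r p + beta M r q.
Proof. by rewrite /beta linearD /= mulmxDr mxE. Qed.
Lemma betaZr M (k : R) p r : beta M r (k *: p) = k * beta M r p.
Proof. by rewrite /beta linearZ /= -scalemxAr mxE. Qed.
Lemma betaC M p q : M^T = M -> beta M p q = beta M q p.
Proof.
move=> hM; rewrite /beta.
have -> : (p *m M *m q^T) 0 0 = ((p *m M *m q^T)^T) 0 0 by rewrite [RHS]mxE.
by rewrite !trmx_mul trmxK hM mulmxA.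
Qed.

Lemma combE (x y z : R) p q r : v3 x y z *m rows3 p q r = x *: p + y *: q + z *: r.
Proof.
apply: rV3P; rewrite !mxE !big_ord_recl big_ord0 !mxE; canon; rewrite /=. all: ring.
Qed.


Definition ev (i : 'I_3) : 'rV[R]_3 :=
  if i == i0 then v3 1 0 0 else if i == i1 then v3 0 1 0 else v3 0 0 1.
Lemma evE0 : ev i0 = v3 1 0 0. Proof. by []. Qed.
Lemma evE1 : ev i1 = v3 0 1 0. Proof. by []. Qed.
Lemma evE2 : ev i2 = v3 0 0 1. Proof. by []. Qed.

Lemma crossZZ (k m : R) p q : cross (k *: p) (m *: q) = (k * m) *: cross p q.
Proof. apply: rV3P; rewrite !scaleE /cross ?v3E0 ?v3E1 ?v3E2 !scaleE; ring. Qed.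
Lemma detZ (k0 k1 k2 : R) p q r :
  dot (k2 *: r) (cross (k0 *: p) (k1 *: q)) = k0 * k1 * k2 * dot r (cross p q).
Proof. rewrite /dot /cross ?v3E0 ?v3E1 ?v3E2 !scaleE; ring. Qed.

Lemma dotZZ (k m : R) p q : dot (k *: p) (m *: q) = k * m * dot p q.
Proof. rewrite /dot !scaleE; ring. Qed.

Lemma kerrow P p q r : P *m (rows3 p q r)^T = 0 ->
  dot P p = 0 /\ dot P q = 0 /\ dot P r = 0.
Proof.
move=> h.
have e0 := congr1 (fun m : 'rV[R]_3 => m 0 i0) h.
have e1 := congr1 (fun m : 'rV[R]_3 => m 0 i1) h.
have e2 := congr1 (fun m : 'rV[R]_3 => m 0 i2) h.
move: e0 e1 e2; rewrite /= !mxE !big_ord_recl !big_ord0 !mxE; canon; rewrite /= /dot.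
move=> e0 e1 e2; split; [|split].
- by rewrite -e0; ring.
- by rewrite -e1; ring.
- by rewrite -e2; ring.
Qed.

Definition Bp (a b c : R) (u v w : 'I_3 -> R) j :=
  v3 (a * v j * w j) (b * u j * w j) (c * u j * v j).

Lemma core2 (a b c : R) (u v w : 'I_3 -> R) (Qf : 'I_3 -> 'I_3 -> 'rV[R]_3) :
  a != 0 -> b != 0 -> c != 0 -> (forall j, u j != 0) -> (forall j, v j != 0) ->
  (forall j, w j != 0) -> (forall j, w j = - u j - v j) ->
  (forall i j k, i != j -> j != k -> i != k ->
     dot (Qf i j) (cross (ev i) (Bp a b c u v w k)) = 0 /\
     dot (Qf i j) (cross (Bp a b c u v w j) (ev k)) = 0) ->
  exists P : 'rV[R]_3, P != 0 /\ dot P (cross (Qf i0 i1) (Qf i1 i0)) = 0 /\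
    dot P (cross (Qf i0 i2) (Qf i2 i0)) = 0 /\ dot P (cross (Qf i1 i2) (Qf i2 i1)) = 0.
Proof.
move=> ha hb hc hu hv hw hW H.
pose Qh i j k := cross (cross (ev i) (Bp a b c u v w k)) (cross (Bp a b c u v w j) (ev k)).
have getQ : forall i j k, i != j -> j != k -> i != k -> Qh i j k 0 i2 != 0 ->
    exists l : R, Qf i j = l *: Qh i j k.
  move=> i j k hij hjk hik hn; have [h1 h2] := H i j k hij hjk hik.
  apply: kerL h1 h2 _; apply/eqP => h0; move: hn; by rewrite /Qh h0 zeroE eqxx.
have nz : forall x : R, x != 0 -> forall y : R, y = x -> y != 0 by move=> x hx y ->.
have [l01 E01] : exists l : R, Qf i0 i1 = l *: Qh i0 i1 i2.
  apply: getQ => //; apply: (nz (b * c * u i1 * u i2 * v i2 * w i1)).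
    by rewrite !mulf_neq0.
  by rewrite /Qh /Bp evE0 evE2 /cross ?v3E0 ?v3E1 ?v3E2; ring.
have [l10 E10] : exists l : R, Qf i1 i0 = l *: Qh i1 i0 i2.
  apply: getQ => //; apply: (nz (- (a * c * v i0 * u i2 * v i2 * w i0))).
    by rewrite oppr_eq0 !mulf_neq0.
  by rewrite /Qh /Bp evE1 evE2 /cross ?v3E0 ?v3E1 ?v3E2; ring.
have [l02 E02] : exists l : R, Qf i0 i2 = l *: Qh i0 i2 i1.
  apply: getQ => //; apply: (nz (- (c * c * u i1 * v i1 * u i2 * v i2))).
    by rewrite oppr_eq0 !mulf_neq0.
  by rewrite /Qh /Bp evE0 evE1 /cross ?v3E0 ?v3E1 ?v3E2; ring.
have [l20 E20] : exists l : R, Qf i2 i0 = l *: Qh i2 i0 i1.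
  apply: getQ => //; apply: (nz (a * c * u i0 * v i0 * v i1 * w i1)).
    by rewrite !mulf_neq0.
  by rewrite /Qh /Bp evE2 evE1 /cross ?v3E0 ?v3E1 ?v3E2; ring.
have [l12 E12] : exists l : R, Qf i1 i2 = l *: Qh i1 i2 i0.
  apply: getQ => //; apply: (nz (c * c * u i0 * v i0 * u i2 * v i2)).
    by rewrite !mulf_neq0.
  by rewrite /Qh /Bp evE1 evE0 /cross ?v3E0 ?v3E1 ?v3E2; ring.
have [l21 E21] : exists l : R, Qf i2 i1 = l *: Qh i2 i1 i0.
  apply: getQ => //; apply: (nz (- (b * c * u i0 * u i1 * v i1 * w i0))).
    by rewrite oppr_eq0 !mulf_neq0.
  by rewrite /Qh /Bp evE2 evE0 /cross ?v3E0 ?v3E1 ?v3E2; ring.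
pose Ls0 := v3 ((u i0)*(u i1)*(v i2)*b*c - (v i0)*(u i1)*(u i2)*b*c) (- (v i0)*(u i1)*(v i2)*a*c + (v i0)*(v i1)*(u i2)*a*c) ((u i0)*(v i1)*(u i2)*a*b + (u i0)*(v i1)*(v i2)*a*b - (v i0)*(u i1)*(u i2)*a*b - (v i0)*(u i1)*(v i2)*a*b).
pose Ls1 := v3 ((u i0)*(v i1)*(u i2)*b*c - (v i0)*(u i1)*(u i2)*b*c) (- (u i0)*(v i1)*(v i2)*a*c + (v i0)*(v i1)*(u i2)*a*c) (- (u i0)*(u i1)*(v i2)*a*b + (u i0)*(v i1)*(u i2)*a*b - (v i0)*(u i1)*(v i2)*a*b + (v i0)*(v i1)*(u i2)*a*b).
pose Ls2 := v3 (- (u i0)*(u i1)*(v i2)*b*c + (u i0)*(v i1)*(u i2)*b*c) (- (u i0)*(v i1)*(v i2)*a*c + (v i0)*(u i1)*(v i2)*a*c) (- (u i0)*(u i1)*(v i2)*a*b - (u i0)*(v i1)*(v i2)*a*b + (v i0)*(u i1)*(u i2)*a*b + (v i0)*(v i1)*(u i2)*a*b).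
have F0 : cross (Qh i0 i1 i2) (Qh i1 i0 i2) = (a * b * w i0 * w i1 * u i2 * v i2 * w i2) *: Ls0.
  apply: rV3P; rewrite !scaleE /Ls0 /Qh /Bp evE0 evE1 evE2 /cross ?v3E0 ?v3E1 ?v3E2 !hW; ring.
have F1 : cross (Qh i0 i2 i1) (Qh i2 i0 i1) = (a * c * v i0 * u i1 * v i1 * w i1 * v i2) *: Ls1.
  apply: rV3P; rewrite !scaleE /Ls1 /Qh /Bp evE0 evE1 evE2 /cross ?v3E0 ?v3E1 ?v3E2 !hW; ring.
have F2 : cross (Qh i1 i2 i0) (Qh i2 i1 i0) = (b * c * u i0 * v i0 * w i0 * u i1 * u i2) *: Ls2.
  apply: rV3P; rewrite !scaleE /Ls2 /Qh /Bp evE0 evE1 evE2 /cross ?v3E0 ?v3E1 ?v3E2 !hW; ring.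
have LsId : dot Ls2 (cross Ls0 Ls1) = 0.
  by rewrite /dot /cross /Ls0 /Ls1 /Ls2 ?v3E0 ?v3E1 ?v3E2; ring.
set L0 := cross (Qf i0 i1) (Qf i1 i0).
set L1 := cross (Qf i0 i2) (Qf i2 i0).
set L2 := cross (Qf i1 i2) (Qf i2 i1).
have hdet : \det (rows3 L0 L1 L2) = 0.
  rewrite detrows /L0 /L1 /L2 E01 E10 E02 E20 E12 E21 !crossZZ F0 F1 F2 !scalerA.
  by rewrite crossZZ scalerA dotZZ LsId mulr0.
have /det0P [P hP0 hPL] : \det (rows3 L0 L1 L2)^T == 0 by rewrite det_tr hdet.
by exists P; split => //; apply: kerrow.
Qed.

Lemma crossN p q : cross q p = - cross p q.
Proof. apply: rV3P; rewrite /cross !mxE /= ?v3E0 ?v3E1 ?v3E2; ring. Qed.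

Lemma dotcrossN r p q : dot r (cross q p) = - dot r (cross p q).
Proof. rewrite /dot /cross ?v3E0 ?v3E1 ?v3E2; ring. Qed.

Lemma dotcrossZr (s : R) r p q : dot r (cross p (s *: q)) = s * dot r (cross p q).
Proof. rewrite /dot /cross ?v3E0 ?v3E1 ?v3E2 !scaleE; ring. Qed.
Lemma dotcrossZl (s : R) r p q : dot r (cross (s *: p) q) = s * dot r (cross p q).
Proof. rewrite /dot /cross ?v3E0 ?v3E1 ?v3E2 !scaleE; ring. Qed.

Lemma beta0l M r : beta M 0 r = 0.
Proof. by rewrite /beta !mul0mx mxE. Qed.

Lemma indep p q : ~ proj_eq p q -> p != 0 -> q != 0 ->
  forall a b : R, a *: p + b *: q = 0 -> a = 0 /\ b = 0.
Proof.
move=> hpq hp hq a b h.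
have e : forall t, a * p 0 t + b * q 0 t = 0.
  by move=> t; have := congr1 (fun m : 'rV[R]_3 => m 0 t) h; rewrite /= !mxE.
have hb : b = 0.
  apply/eqP; apply: contraT => hb; exfalso; apply: hpq.
  have [ha|ha] := eqVneq a 0.
    exfalso; move/eqP: hq; apply; apply/rowP => t; rewrite mxE.
    by have := e t; rewrite ha mul0r add0r => /eqP; rewrite mulf_eq0 (negbTE hb) => /eqP.
  exists (- (a / b)); split; first by rewrite oppr_eq0 mulf_neq0 ?invr_eq0.
  apply/rowP => t; rewrite !mxE.
  have -> : q 0 t = ((a * p 0 t + b * q 0 t) - a * p 0 t) / b by field.
  by rewrite e; field.
split => //.
apply/eqP; apply: contraT => ha; exfalso; move/eqP: hp; apply; apply/rowP => t; rewrite mxE.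
by have := e t; rewrite hb mul0r addr0 => /eqP; rewrite mulf_eq0 (negbTE ha) => /eqP.
Qed.

Lemma minj (M : 'M[R]_3) (x : 'rV[R]_3) : \det M != 0 -> x *m M = 0 -> x = 0.
Proof.
move=> hd h; have uM : M \in unitmx by rewrite unitmxE unitfE.
by rewrite -(mulmxK uM x) h mul0mx.
Qed.

Lemma iso (M : 'M[R]_3) p q : M^T = M -> \det M != 0 -> p != 0 -> q != 0 ->
  ~ proj_eq p q -> beta M p p = 0 -> beta M q q = 0 -> beta M p q = 0 -> False.
Proof.
move=> hs hd hp hq hpq hpp hqq hpq0.
have hn : cross p q != 0.
  apply/eqP => hc.
  have hc' : cross q p = 0 by rewrite crossN hc oppr0.
  have [l hl] := @par _ _ hc' hp.
  apply: hpq; exists l; split => //.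
  apply/eqP => l0; move/eqP: hq; apply; by rewrite hl l0 scale0r.
have [l hl] : exists l : R, p *m M = l *: cross p q.
  by apply: (@kerL (p *m M) p q) => //; rewrite -betaE.
have [m hm] : exists l : R, q *m M = l *: cross p q.
  by apply: (@kerL (q *m M) p q) => //; rewrite -betaE // betaC.
have h0 : (m *: p + (- l) *: q) *m M = 0.
  rewrite mulmxDl -!scalemxAl hl hm !scalerA.
  rewrite -scalerDl.
  have -> : m * l + - l * m = 0 by ring.
  by rewrite scale0r.
have [m0 l0] := @indep p q hpq hp hq _ _ (@minj M _ hd h0).
move/eqP: hp; apply; apply: (@minj M _ hd).
have l00 : l = 0 by rewrite -[l]opprK l0 oppr0.
by rewrite hl l00 scale0r.
Qed.

End Aux.

Section Main.
Variable R : realType.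
Implicit Types (p q r : 'rV[R]_3).

Lemma rows3_mul p q r (T : 'M[R]_3) :
  rows3 (p *m T) (q *m T) (r *m T) = rows3 p q r *m T.
Proof.
apply/matrixP => i j; case: (ord3P i) => [->|[->|->]]; rewrite !mxE /=;
  by apply: eq_bigr => k _; rewrite mxE.
Qed.

Lemma conic_frame (M : 'M[R]_3) p0 p1 p2 (x y z : R) : M^T = M ->
  beta M p0 p0 = 0 -> beta M p1 p1 = 0 -> beta M p2 p2 = 0 ->
  beta M (x *: p0 + y *: p1 + z *: p2) (x *: p0 + y *: p1 + z *: p2) =
  2 * (beta M p1 p2 * (y * z) + beta M p0 p2 * (x * z) + beta M p0 p1 * (x * y)).
Proof.
move=> hs h0 h1 h2.
rewrite !betaDl !betaDr !betaZl !betaZr h0 h1 h2.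
rewrite (@betaC _ _ p1 p0 hs) (@betaC _ _ p2 p0 hs) (@betaC _ _ p2 p1 hs); ring.
Qed.

Lemma single p q (t : R) : q = t *: p -> q != 0 -> ~ proj_eq p q -> False.
Proof.
move=> e hq hpq; apply: hpq; exists t; split => //.
apply/eqP => t0; move/eqP: hq; apply; by rewrite e t0 scale0r.
Qed.

Lemma frame_nz (a b c x y z : R) p0 p1 p2 q : a != 0 -> b != 0 -> c != 0 -> q != 0 ->
  q = x *: p0 + y *: p1 + z *: p2 -> a * (y * z) + b * (x * z) + c * (x * y) = 0 ->
  ~ proj_eq p0 q -> ~ proj_eq p1 q -> ~ proj_eq p2 q -> [/\ x != 0, y != 0 & z != 0].
Proof.
move=> ha hb hc hq e hcon h0 h1 h2.
have prod0 : forall k s t : R, k != 0 -> k * (s * t) = 0 -> s = 0 \/ t = 0.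
  move=> k s t hk /eqP; rewrite !mulf_eq0 (negbTE hk) /= => /orP [] /eqP; by [left|right].
split; apply/eqP => h.
- rewrite h ?mul0r ?mulr0 !addr0 in hcon; case: (prod0 _ _ _ ha hcon) => h'.
    by apply: (single (t := z) _ hq h2); rewrite e h h' !scale0r !add0r.
  by apply: (single (t := y) _ hq h1); rewrite e h h' !scale0r add0r addr0.
- rewrite h ?mul0r ?mulr0 add0r addr0 in hcon; case: (prod0 _ _ _ hb hcon) => h'.
    by apply: (single (t := z) _ hq h2); rewrite e h h' !scale0r !add0r.
  by apply: (single (t := x) _ hq h0); rewrite e h h' !scale0r !addr0.
- rewrite h ?mul0r ?mulr0 !add0r in hcon; case: (prod0 _ _ _ hc hcon) => h'.
    by apply: (single (t := y) _ hq h1); rewrite e h h' !scale0r add0r addr0.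
  by apply: (single (t := x) _ hq h0); rewrite e h h' !scale0r !addr0.
Qed.


Lemma main (M : 'M[R]_3) (A B : 'I_3 -> 'rV[R]_3)
    (Q : 'I_3 -> 'I_3 -> 'rV[R]_3) :
  nondeg_conic M ->
  (forall i, ppoint (A i) /\ on_conic M (A i)) ->
  (forall i, ppoint (B i) /\ on_conic M (B i)) ->
  (forall i j, i != j -> ~ proj_eq (A i) (A j)) ->
  (forall i j, i != j -> ~ proj_eq (B i) (B j)) ->
  (forall i j, ~ proj_eq (A i) (B j)) ->
  (forall i j k, i != j -> j != k -> i != k ->
     ppoint (Q i j) /\ collinear (A i) (B k) (Q i j) /\ collinear (B j) (A k) (Q i j)) ->
  (forall i j, i != j -> ~ proj_eq (Q i j) (Q j i)) ->
  exists P : 'rV[R]_3, ppoint P /\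
    (forall i j, i != j -> collinear (Q i j) (Q j i) P).
Proof.
move=> [hMs hMd] hA hB hAA hBB hAB hQ _.
have Anz i : A i != 0 by case: (hA i).
have Acon i : beta M (A i) (A i) = 0 by case: (hA i).
have Bnz j : B j != 0 by case: (hB j).
have Bcon j : beta M (B j) (B j) = 0 by case: (hB j).
have mnz : forall i j, i != j -> beta M (A i) (A j) != 0.
  move=> i j hij; apply/eqP => h.
  exact: (iso hMs hMd (Anz i) (Anz j) (hAA i j hij) (Acon i) (Acon j) h).
set T := rows3 (A i0) (A i1) (A i2).
have hT : \det T != 0.
  apply/negP => /det0P [v hv0 hvT].
  have hv : ~ [/\ v 0 i0 = 0, v 0 i1 = 0 & v 0 i2 = 0].
    by case=> h0 h1 h2; move/eqP: hv0; apply; apply: rV3P; rewrite zeroE.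
  move: hvT; rewrite (v3K v) combE.
  move: hv; move: (v 0 i0) (v 0 i1) (v 0 i2) => v0 v1 v2 hv hvT.
  have E j := congr1 (fun s => beta M s (A j)) hvT.
  have [h0|h0] := eqVneq v0 0.
    rewrite h0 scale0r add0r in hvT.
    have [h1 h2] := indep (hAA i1 i2 isT) (Anz i1) (Anz i2) hvT.
    by apply: hv.
  have [h1|h1] := eqVneq v1 0.
    rewrite h1 scale0r addr0 in hvT.
    have [h0' h2] := indep (hAA i0 i2 isT) (Anz i0) (Anz i2) hvT.
    by apply: hv.
  have E0 := E i0; have E1 := E i1; have E2 := E i2.
  rewrite /= !betaDl !betaZl !beta0l !Acon in E0 E1 E2.
  rewrite (@betaC _ _ (A i1) (A i0) hMs) (@betaC _ _ (A i2) (A i0) hMs) in E0.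
  rewrite (@betaC _ _ (A i2) (A i1) hMs) in E1.
  have : 2 * (v0 * v1 * beta M (A i0) (A i1)) = 0.
    transitivity (v0 * (v0 * 0 + v1 * beta M (A i0) (A i1) + v2 * beta M (A i0) (A i2))
      + v1 * (v0 * beta M (A i0) (A i1) + v1 * 0 + v2 * beta M (A i1) (A i2))
      - v2 * (v0 * beta M (A i0) (A i2) + v1 * beta M (A i1) (A i2) + v2 * 0)); first by ring.
    by rewrite E0 E1 E2; ring.
  move/eqP; rewrite !mulf_eq0 pnatr_eq0 /= (negbTE h0) (negbTE h1) (negbTE (mnz i0 i1 isT)).
  by [].
have uT : T \in unitmx by rewrite unitmxE unitfE.
set Ti := invmx T.
have decomp : forall p, p = (p *m Ti) *m T by move=> p; rewrite mulmxKV.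
have combT : forall p, p = (p *m Ti) 0 i0 *: A i0 + (p *m Ti) 0 i1 *: A i1 + (p *m Ti) 0 i2 *: A i2.
  by move=> p; rewrite {1}(decomp p) {1}(v3K (p *m Ti)) combE.
have evT : forall i, ev R i *m T = A i.
  move=> i; case: (ord3P i) => [->|[->|->]]; rewrite ?evE0 ?evE1 ?evE2 combE;
  by rewrite !scale1r !scale0r ?addr0 ?add0r.
have AT : forall i, A i *m Ti = ev R i by move=> i; rewrite -evT mulmxK.
have colT : forall p q r, collinear p q r <-> dot (r *m Ti) (cross (p *m Ti) (q *m Ti)) = 0.
  move=> p q r; rewrite /collinear {1}(decomp p) {1}(decomp q) {1}(decomp r) rows3_mul det_mulmx detrows.
  split; first by move/eqP; rewrite mulf_eq0 (negbTE hT) orbF => /eqP.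
  by move=> ->; rewrite mul0r.
pose a := beta M (A i1) (A i2); pose b := beta M (A i0) (A i2); pose c := beta M (A i0) (A i1).
have ha : a != 0 by apply: mnz.
have hb : b != 0 by apply: mnz.
have hc : c != 0 by apply: mnz.
pose xf j := (B j *m Ti) 0 i0; pose yf j := (B j *m Ti) 0 i1; pose zf j := (B j *m Ti) 0 i2.
have Bfr : forall j, [/\ xf j != 0, yf j != 0, zf j != 0 &
    a * (yf j * zf j) + b * (xf j * zf j) + c * (xf j * yf j) = 0].
  move=> j.
  have e : B j = xf j *: A i0 + yf j *: A i1 + zf j *: A i2 by apply: combT.
  have hcon : a * (yf j * zf j) + b * (xf j * zf j) + c * (xf j * yf j) = 0.
    have := Bcon j; rewrite {1 2}e conic_frame // => /eqP; rewrite mulf_eq0 pnatr_eq0 /=.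
    by move/eqP.
  have [h1 h2 h3] := frame_nz ha hb hc (Bnz j) e hcon (hAB i0 j) (hAB i1 j) (hAB i2 j).
  by split.
pose u j := a * (yf j * zf j); pose v j := b * (xf j * zf j); pose w j := c * (xf j * yf j).
have BpE : forall j, Bp a b c u v w j = (a * b * c * (xf j * yf j * zf j)) *: (B j *m Ti).
  move=> j; apply: rV3P; rewrite scaleE /Bp ?v3E0 ?v3E1 ?v3E2 /u /v /w /xf /yf /zf; ring.
have [P' [hP0 [h01 [h02 h12]]]] : exists P : 'rV[R]_3, P != 0 /\
    dot P (cross (Q i0 i1 *m Ti) (Q i1 i0 *m Ti)) = 0 /\
    dot P (cross (Q i0 i2 *m Ti) (Q i2 i0 *m Ti)) = 0 /\
    dot P (cross (Q i1 i2 *m Ti) (Q i2 i1 *m Ti)) = 0.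
  apply: (@core2 _ a b c u v w (fun i j => Q i j *m Ti)) => //.
  - by move=> j; case: (Bfr j) => h1 h2 h3 _; rewrite /u !mulf_neq0.
  - by move=> j; case: (Bfr j) => h1 h2 h3 _; rewrite /v !mulf_neq0.
  - by move=> j; case: (Bfr j) => h1 h2 h3 _; rewrite /w !mulf_neq0.
  - move=> j; case: (Bfr j) => _ _ _ h.
    rewrite /u /v /w; transitivity (c * (xf j * yf j) - (a * (yf j * zf j) + b * (xf j * zf j) + c * (xf j * yf j))); last by ring.
    by rewrite h subr0.
  - move=> i j k hij hjk hik; have [_ [c1 c2]] := hQ i j k hij hjk hik.
    move/colT: c1; move/colT: c2; rewrite !AT => c2 c1.
    by rewrite !BpE dotcrossZr dotcrossZl c1 c2 !mulr0.
exists (P' *m T); split.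
  apply/eqP => h; move/eqP: hP0; apply; by rewrite -(mulmxK uT P') h mul0mx.
have key : forall i j, i != j -> dot P' (cross (Q i j *m Ti) (Q j i *m Ti)) = 0.
  move=> i j hij.
  case: (ord3P i) => [ei|[ei|ei]]; case: (ord3P j) => [ej|[ej|ej]]; rewrite ei ej in hij *;
    rewrite ?eqxx // ?h01 ?h02 ?h12 // dotcrossN ?h01 ?h02 ?h12 ?oppr0 //.
move=> i j hij; apply/colT; rewrite mulmxK //; exact: key.
Qed.

End Main.

Unset Implicit Arguments. Set Strict Implicit.

Theorem theorem2 (R : realType) (M : 'M[R]_3) (A B : 'I_3 -> 'rV[R]_3)
    (Q : 'I_3 -> 'I_3 -> 'rV[R]_3) :
  nondeg_conic M ->
  (forall i, ppoint (A i) /\ on_conic M (A i)) ->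
  (forall i, ppoint (B i) /\ on_conic M (B i)) ->
  (* the six vertices of the hexagon are pairwise distinct *)
  (forall i j, i != j -> ~ proj_eq (A i) (A j)) ->
  (forall i j, i != j -> ~ proj_eq (B i) (B j)) ->
  (forall i j, ~ proj_eq (A i) (B j)) ->
  (* Q_ij is the intersection point of lines A_i B_k and B_j A_k *)
  (forall i j k, i != j -> j != k -> i != k ->
     ppoint (Q i j) /\ collinear (A i) (B k) (Q i j) /\ collinear (B j) (A k) (Q i j)) ->
  (* general position: the lines Q_ij Q_ji are well defined *)
  (forall i j, i != j -> ~ proj_eq (Q i j) (Q j i)) ->
  exists P : 'rV[R]_3, ppoint P /\
    (forall i j, i != j -> collinear (Q i j) (Q j i) P).
Proof. exact: (@main R M A B Q). Qed.
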